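(* Let $(\mathcal{X},\mathcal{F})$ be a measurable space, $\bar p$ a probability measure on $\mathcal{X}$, $r:\mathcal{X}\to\mathbb{R}$ a measurable reward function, $M\ge 1$ an integer and $\alpha\in(0,\infty)$. Let $X^{(1)},\dots,X^{(M)}$ be i.i.d. with law $\bar p$, set $R_i:=r(X^{(i)})$, let $\hat P_X:=\frac1M\sum_{i=1}^M\delta_{X^{(i)}}$ be their empirical distribution and $\hat F_R(u):=\frac1M\#\{i: R_i\le u\}$ the empirical CDF of the rewards. Let $A:\mathbb{R}\times[0,1]\times\mathcal{X}\times\mathcal{P}(\mathcal{X})\to[0,1]$ be a measurable acceptance function which is coordinatewise nondecreasing in its first two arguments. Put $p_i:=A(R_i,\hat F_R(R_i),X^{(i)},\hat P_X)$ and let $C_1,\dots,C_M$ be $\{0,1\}$-valued random variables (not necessarily independent of one another) with $\mathbb{P}(C_i=1\mid X^{(1)},\dots,X^{(M)})=p_i$ for each $i$. Let the accepted set be $\mathcal{A}:=\{X^{(i)}: C_i=1\}$ and assume $\mathbb{P}(X^{(1)}\in\mathcal{A})>0$. Define $$g(x):=\mathbb{E}\big[A(r(x),\hat F_R(r(x)),x,\hat P_X)\,\big|\,X^{(1)}=x\big],\qquad \frac{\hat r(x)}{\alpha}:=\log g(x)\in[-\infty,0],$$ where the expectation is over $X^{(2)},\dots,X^{(M)}$ (i.e. over the randomness of $\hat F_R,\hat P_X$ given $X^{(1)}=x$). Then the conditional law of $X^{(1)}$ given $X^{(1)}\in\mathcal{A}$ has density $g/\int g\,d\bar p$ with respect to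 $\bar p$, i.e. it is proportional to $\exp(\hat r(x)/\alpha)\,\bar p(dx)$; equivalently, it is the solution of the KL-regularized (PPO) problem $$\operatorname*{argmax}_{\hat p}\Big[\mathbb{E}_{x\sim\hat p}\,\hat r(x)-\alpha\,\mathsf{KL}(\hat p\,\|\,\bar p)\Big].$$
   Context: $\mathcal{P}(\mathcal{X})$ denotes the set of probability measures on $\mathcal{X}$. For a reward $\rho$ and reference $\bar p$, the maximizer over probability measures $p$ of $\mathbb{E}_{X\sim p}[\rho(X)]-\alpha\mathsf{KL}(p\|\bar p)$ is the measure $p(dx)\propto\exp(\rho(x)/\alpha)\bar p(dx)$. The sampling scheme described (accepting $X^{(i)}$ iff $C_i=1$) is called Generalized Rejection Sampling (GRS). *)

(* Defs.v *)
From HB Require Import structures.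
From mathcomp Require Import all_boot all_order all_algebra.
From mathcomp Require Import all_classical all_reals all_analysis.
Set Implicit Arguments. Unset Strict Implicit. Unset Printing Implicit Defensive.
Import Order.TTheory GRing.Theory Num.Theory.
Local Open Scope classical_set_scope.
Local Open Scope ring_scope.

Section defs.
Context (d : measure_display) (T : measurableType d) (R : realType).

(* Empirical distribution (1/M) sum_i delta_{xs i} of a sample xs of size
   M = n.+1, as a probability measure: the normalization of the finite sum of
   Dirac masses (its total mass is M, finite and nonzero, so the default
   argument of mnormalize is never used). *)
Definition empirical (n : nat) (xs : 'I_n.+1 -> T) : probability T R :=
  mnormalize (msum (fun k : nat => (\d_(xs (inord k)) : {measure set T -> \bar R}))
                   n.+1)
             (\d_(xs ord0)).

Definition emp_cdf (n : nat) (r : T -> R) (xs : 'I_n.+1 -> T) (u : R) : R :=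
  (#|[set i : 'I_n.+1 | r (xs i) <= u]|%:R / n.+1%:R).

Definition accept_prob (n : nat) (r : T -> R)
    (A : R -> R -> T -> pprobability T R -> R) (xs : 'I_n.+1 -> T) (x : T) : R :=
  A (r x) (emp_cdf r xs (r x)) x (empirical xs).

Definition iid_with_law d' (Omega : measurableType d') (n : nat)
    (P : probability Omega R) (X : 'I_n.+1 -> Omega -> T) (pbar : probability T R) :=
  (forall i, measurable_fun setT (X i)) /\
  forall B : 'I_n.+1 -> set T, (forall i, measurable (B i)) ->
    P (\bigcap_(i in [set: 'I_n.+1]) (X i @^-1` B i)) =
    (\prod_(i < n.+1) pbar (B i))%E.

Definition sigmaX d' (Omega : measurableType d') (n : nat)
    (X : 'I_n.+1 -> Omega -> T) : set (set Omega) :=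
  <<s \bigcup_(i in [set: 'I_n.+1]) preimage_set_system setT (X i) measurable >>.

Definition sample_with_first d' (Omega : measurableType d') (n : nat)
    (X : 'I_n.+1 -> Omega -> T) (x : T) (w : Omega) : 'I_n.+1 -> T :=
  fun i => if i == ord0 then x else X i w.

Definition gfun d' (Omega : measurableType d') (n : nat) (P : probability Omega R)
    (X : 'I_n.+1 -> Omega -> T) (r : T -> R)
    (A : R -> R -> T -> pprobability T R -> R) (x : T) : \bar R :=
  (\int[P]_w (accept_prob r A (sample_with_first X x w) x)%:E)%E.

End defs.

(* Main.v *)
Require Import Defs.
From HB Require Import structures.
From mathcomp Require Import all_boot all_order all_algebra.
From mathcomp Require Import all_classical all_reals all_analysis.
From mathcomp Require Import measurable_realfun.
Set Implicit Arguments. Unset Strict Implicit. Unset Printing Implicit Defensive.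
Import Order.TTheory GRing.Theory Num.Theory.
Local Open Scope classical_set_scope.
Local Open Scope ring_scope.

Section meas.
Context (R : realType) (d : measure_display) (T : measurableType d)
  (r : T -> R) (n : nat) (A : R -> R -> T -> pprobability T R -> R).
Hypothesis mr : measurable_fun setT r.
Hypothesis mA : measurable_fun setT
    (fun z : R * R * T * pprobability T R => A z.1.1.1 z.1.1.2 z.1.2 z.2).

Definition mk (x : T) (s : n.-tuple T) : 'I_n.+1 -> T :=
  fun j => match unlift ord0 j with Some i => tnth s i | None => x end.

Lemma mk_meas j : measurable_fun setT (fun z : T * n.-tuple T => mk z.1 z.2 j).
Proof.
rewrite /mk; case: (unlift ord0 j) => [i|]; last exact: measurable_fst.
exact: measurableT_comp (measurable_tnth i) measurable_snd.
Qed.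

Lemma emp_cdfE (xs : 'I_n.+1 -> T) u :
  emp_cdf r xs u = (\sum_(i < n.+1) ((r (xs i) <= u)%R : nat)%:R) / n.+1%:R.
Proof.
rewrite /emp_cdf; congr (_ / _).
rewrite -sum1_card natr_sum big_mkcond /=; apply: eq_bigr => i _.
case: ifPn => [/set_mem -> //|H]; case E: (_ <= _) => //; by case/negP: H; apply: mem_set.
Qed.

Lemma measurable_b2R (D : set bool) (f : bool -> R) : measurable_fun D f.
Proof. by move=> mD Y mY; apply: measurableI. Qed.

Lemma emp_cdf_meas : measurable_fun setT
  (fun z : T * n.-tuple T => emp_cdf r (mk z.1 z.2) (r z.1)).
Proof.
under eq_fun do rewrite emp_cdfE.
apply: measurable_realfun.measurable_funM => //; apply: measurable_sum => i.
apply: (@measurableT_comp _ _ _ _ _ _ (fun b : bool => (b : nat)%:R : R)); first exact: measurable_b2R.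
apply: measurable_realfun.measurable_fun_ler.
  exact: measurableT_comp mr (mk_meas i).
exact: measurableT_comp mr measurable_fst.
Qed.

Lemma empiricalE (xs : 'I_n.+1 -> T) (U : set T) :
  empirical R xs U =
  ((\sum_(k < n.+1) \d_(xs (inord k)) U) * (n.+1%:R^-1)%:E)%E.
Proof.
have H : (msum (fun k : nat => (\d_(xs (inord k)) : {measure set T -> \bar R})) n.+1 setT) = n.+1%:R%:E.
  rewrite /msum /=.
  under eq_bigr do rewrite diracT.
  by rewrite sumEFin sumr_const card_ord.
rewrite /empirical /= /mnormalize /= H.
have -> : ((n.+1%:R)%:E == 0 :> \bar R) = false by rewrite eqe pnatr_eq0.
by [].
Qed.

Lemma empirical_meas : measurable_fun setT
  (fun z : T * n.-tuple T => (empirical R (mk z.1 z.2) : pprobability T R)).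
Proof.
apply: (measurability (@pset _ _ _ : set (set (pprobability T R)))) => //.
move=> _ -[_ [r' r01] [U mU <-]] <-.
rewrite /mset /preimage /=.
apply: measurable_realfun.emeasurable_fun_infty_o => //.
under eq_fun do rewrite empiricalE.
apply: emeasurable_funM => //.
apply: emeasurable_sum => k.
under eq_fun do rewrite diracE.
apply/measurable_realfun.measurable_EFinP.
apply: (@measurableT_comp _ _ _ _ _ _ (fun b : bool => (b : nat)%:R : R)); first exact: measurable_b2R.
apply: (measurable_fun_bool true) => //.
rewrite (_ : _ @^-1` _ = (fun z : T * n.-tuple T => mk z.1 z.2 (inord k)) @^-1` U).
  by have := @mk_meas (inord k) measurableT U mU.
by apply/seteqP; split => z /=; rewrite /preimage /= ?inE => H; [move: H => /set_mem|apply: mem_set].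
Qed.

Definition Phi (z : T * n.-tuple T) : \bar R := (accept_prob r A (mk z.1 z.2) z.1)%:E.

Lemma Phi_meas : measurable_fun setT (fun z : T * n.-tuple T => Phi z).
Proof.
apply/measurable_realfun.measurable_EFinP.
have -> : (fun z => accept_prob r A (mk z.1 z.2) z.1) =
  (fun w : R * R * T * pprobability T R => A w.1.1.1 w.1.1.2 w.1.2 w.2) \o
  (fun z : T * n.-tuple T => (r z.1, emp_cdf r (mk z.1 z.2) (r z.1), z.1,
      (empirical R (mk z.1 z.2) : pprobability T R))) by [].
apply: measurableT_comp mA _.
apply: measurable_fun_pair; last exact: empirical_meas.
apply: measurable_fun_pair; last exact: measurable_fst.
apply: measurable_fun_pair; last exact: emp_cdf_meas.
exact: measurableT_comp mr measurable_fst.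
Qed.

Lemma Phi_ge0 z : (0 <= Phi z)%E.
Proof. Abort.
End meas.


Section cyl.
Context (d : measure_display) (T : measurableType d) (n : nat).

Definition cyl : set (set (n.-tuple T)) :=
  [set C | exists Bs : 'I_n -> set T, (forall i, measurable (Bs i)) /\
     C = \bigcap_(i in [set: 'I_n]) ((fun s => tnth s i) @^-1` Bs i)].

Lemma cyl_meas C : cyl C -> measurable C.
Proof.
move=> [Bs [mB ->]]; apply: fin_bigcap_measurable; first exact: finite_finset.
move=> i _; rewrite -[X in measurable X]setTI; exact: measurable_tnth.
Qed.

Lemma cyl_setI : setI_closed cyl.
Proof.
move=> _ _ [B1 [m1 ->]] [B2 [m2 ->]]; exists (fun i => B1 i `&` B2 i); split.
  by move=> i; apply: measurableI.
by apply/seteqP; split => s /=; [move=> [H1 H2] i _; split; [exact: H1|exact: H2]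
  | move=> H; split => i _; have [] := H i I].
Qed.

Lemma cylT : cyl setT.
Proof.
exists (fun _ => setT); split => // ; by apply/seteqP; split.
Qed.

Lemma cyl_gen : @measurable _ (n.-tuple T) = <<s cyl >>.
Proof.
apply/seteqP; split.
  change (g_sigma_preimage (fun i (x : n.-tuple T) => tnth x i) `<=` <<s cyl >>).
  apply: smallest_sub; first exact: smallest_sigma_algebra.
  rewrite -bigcup_seq => _ [i _ [Y mY <-]].
  apply: sub_gen_smallest.
  exists (fun j => if j == i then Y else setT); split.
    by move=> j; case: ifPn.
  apply/seteqP; split => s /=.
    by move=> [_ Hs] j _; case: ifPn => // /eqP ->.
  by move=> H; split => //; have := H i I; rewrite eqxx.
apply: smallest_sub; first exact: sigma_algebra_measurable.
exact: cyl_meas.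
Qed.
End cyl.


Section main.
Context (R : realType) (d : measure_display) (T : measurableType d)
  (pbar : probability T R) (n : nat)
  (dO : measure_display) (Omega : measurableType dO) (P : probability Omega R)
  (X : 'I_n.+1 -> Omega -> T).
Hypothesis iid : iid_with_law P X pbar.

Definition Xr (w : Omega) : n.-tuple T := [tuple X (lift ord0 i) w | i < n].

Lemma Xr_meas : measurable_fun setT Xr.
Proof.
apply/measurable_fun_tnthP => i; rewrite /comp.
under eq_fun do rewrite tnth_mktuple.
exact: iid.1.
Qed.

Lemma X0_meas : measurable_fun setT (X ord0).
Proof. exact: iid.1. Qed.

Lemma indep_cyl (B : set T) (Bs : 'I_n -> set T) : measurable B ->
  (forall i, measurable (Bs i)) ->
  P (X ord0 @^-1` B `&` Xr @^-1` \bigcap_(i in [set: 'I_n]) ((fun s => tnth s i) @^-1` Bs i))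
  = (pbar B * \prod_(i < n) pbar (Bs i))%E.
Proof.
move=> mB mBs.
pose Bf : 'I_n.+1 -> set T := fun j => if unlift ord0 j is Some i then Bs i else B.
have mBf : forall j, measurable (Bf j) by move=> j; rewrite /Bf; case: (unlift _ _).
have := iid.2 Bf mBf.
rewrite big_ord_recl.
have -> : Bf ord0 = B by rewrite /Bf unlift_none.
under eq_bigr do rewrite /Bf liftK.
move=> <-; congr (P _).
apply/seteqP; split => w /=.
  move=> [H0 H] j _; rewrite /Bf; case: unliftP => [i ->|->] //.
  by have := H i I; rewrite /= tnth_mktuple.
move=> H; split; first by have := H ord0 I; rewrite /Bf unlift_none.
by move=> i _; rewrite /preimage /= tnth_mktuple; have := H (lift ord0 i) I; rewrite /Bf liftK.
Qed.


HB.instance Definition _ := isMeasurableFun.Build _ _ _ _ _ Xr_meas.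

Lemma pbar_fin (B : set T) : measurable B -> pbar B = (fine (pbar B))%:E.
Proof. by move=> mB; rewrite fineK // fin_num_measure. Qed.

Lemma indep (B : set T) (D : set (n.-tuple T)) : measurable B -> measurable D ->
  P (X ord0 @^-1` B `&` Xr @^-1` D) = (pbar B * P (Xr @^-1` D))%E.
Proof.
move=> mB mD.
have mX0B : measurable (X ord0 @^-1` B).
  by rewrite -[X in measurable X]setTI; exact: X0_meas.
pose m1 := measure_function_pushforward__canonical__measure_function_Measure (mrestr P mX0B) Xr_meas.
pose m2 := mscale (NngNum (fine_ge0 (measure_ge0 pbar B))) (distribution P Xr).
have cov : \bigcup_(k : nat) (setT : set (n.-tuple T)) = setT.
  by apply/seteqP; split => // x _; exists 0%N.
rewrite setIC [pbar B]pbar_fin //.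
apply: (measure_unique (@cyl _ T n) (fun _ => setT) (@cyl_gen _ T n) (@cyl_setI _ T n) (fun _ => @cylT _ T n) cov m1 m2 _ _ D mD).
- move=> _ [Bs [mBs ->]].
  rewrite /= /mrestr /pushforward /mscale /distribution /pushforward /= -pbar_fin //.
  rewrite setIC indep_cyl //.
  rewrite /distribution /pushforward /=.
  have := indep_cyl measurableT mBs; rewrite preimage_setT setTI => ->.
  by rewrite probability_setT mul1e.
- move=> _; rewrite /= /mrestr /pushforward /=.
  apply: (le_lt_trans (probability_le1 _ _)) => //.
  by rewrite preimage_setT setTI.
  by rewrite ltry.
Qed.

Definition Z (w : Omega) : T * n.-tuple T := (X ord0 w, Xr w).

Lemma Z_meas : measurable_fun setT Z.
Proof. exact: measurable_fun_pair X0_meas Xr_meas. Qed.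

Lemma joint (Y : set (T * n.-tuple T)) : measurable Y ->
  (pbar \x distribution P Xr)%E Y = P (Z @^-1` Y).
Proof.
move=> mY.
pose m' := measure_function_pushforward__canonical__measure_function_Measure P Z_meas.
apply: (@product_measure_unique _ _ _ _ _ pbar (distribution P Xr) m') => // A B mA mB.
by rewrite /= /pushforward /distribution /pushforward /= -indep.

Qed.

Lemma key (F : T * n.-tuple T -> \bar R) : measurable_fun setT F ->
  (forall z, (0 <= F z)%E) -> forall B, measurable B ->
  (\int[P]_(w in X ord0 @^-1` B) F (Z w) =
   \int[pbar]_(x in B) \int[P]_w F (x, Xr w))%E.
Proof.
move=> mF F0 B mB.
have mBT : measurable (B `*` [set: n.-tuple T]) by exact: measurableX.
have mZB : Z @^-1` (B `*` setT) = X ord0 @^-1` B.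
  by apply/seteqP; split => w /=; [case|split].
transitivity (\int[pushforward P Z]_(z in B `*` setT) F z)%E.
  rewrite (ge0_integral_pushforward Z_meas) //; first by rewrite mZB.
  exact: measurable_funTS.
rewrite (eq_measure_integral (pbar \x distribution P Xr)%E); last 2 first.
- exact: Z_meas.
- by move=> mf A mA _; rewrite /= /pushforward (joint mA).
have mFp : measurable_fun setT (F \_ (B `*` [set: n.-tuple T])).
  by apply/(measurable_restrictT _ mBT)/measurable_funTS.
have Fp0 : forall z, (0 <= (F \_ (B `*` [set: n.-tuple T])) z)%E.
  by move=> z; rewrite patchE; case: ifPn.
rewrite integral_mkcond fubini_tonelli1 //.
rewrite [RHS]integral_mkcond; apply: eq_integral => x _.
rewrite /fubini_F patchE; case: ifPn => xB.
  rewrite ge0_integral_distribution //; last first.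
    exact: (@measurable_fun_pair2 _ _ _ T _ _ (F \_ (B `*` [set: n.-tuple T])) x mFp).
  apply: eq_integral => w _; rewrite /= patchE ifT //.
  by apply/mem_set; split => //; move/set_mem: xB.
rewrite /point /=.
apply: integral0_eq => y _; rewrite patchE ifF //.
apply/negbTE/negP => /set_mem [H _]; move/negP: xB; apply; exact/mem_set.
Qed.
End main.

Unset Implicit Arguments. Set Strict Implicit. Set Printing Implicit Defensive.


Theorem lemma2 (R : realType) (d : measure_display) (T : measurableType d)
  (pbar : probability T R) (r : T -> R) (n : nat)
  (A : R -> R -> T -> pprobability T R -> R)
  (dO : measure_display) (Omega : measurableType dO) (P : probability Omega R)
  (X : 'I_n.+1 -> Omega -> T) (C : 'I_n.+1 -> Omega -> bool) :
  measurable_fun setT r ->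
  measurable_fun setT
    (fun z : R * R * T * pprobability T R => A z.1.1.1 z.1.1.2 z.1.2 z.2) ->
  (forall a b x mu, 0 <= A a b x mu <= 1) ->
  (forall a a' b b' x mu, a <= a' -> b <= b' -> A a b x mu <= A a' b' x mu) ->
  iid_with_law P X pbar ->
  (forall i, measurable [set w | C i w]) ->
  (forall i (E : set Omega), sigmaX X E ->
     P (E `&` [set w | C i w]) =
     (\int[P]_(w in E) (accept_prob r A (fun j => X j w) (X i w))%:E)%E) ->
  (0 < P [set w | C ord0 w])%E ->
  (0 < \int[pbar]_x gfun P X r A x)%E /\
  forall B : set T, measurable B ->
    (P (X ord0 @^-1` B `&` [set w | C ord0 w]) / P [set w | C ord0 w])%E =
    ((\int[pbar]_(x in B) gfun P X r A x) / (\int[pbar]_x gfun P X r A x))%E.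
Proof.
move=> mr mA A01 Amono iid mC hC C0.
have hPhi : forall x w, @Phi R d T r n A (x, Xr X w) =
    (accept_prob r A (sample_with_first X x w) x)%:E.
  move=> x w; rewrite /Phi /=; congr (_%:E); congr (accept_prob _ _ _ _).
  apply/funext => j; rewrite /mk /sample_with_first.
  by case: unliftP => [i ->|->] //=; rewrite /Xr tnth_mktuple.
have hZ : forall w, @Phi R d T r n A (Z X w) =
    (accept_prob r A (fun j => X j w) (X ord0 w))%:E.
  move=> w; rewrite /Z hPhi; congr (_%:E); congr (accept_prob _ _ _ _).
  apply/funext => j; rewrite /sample_with_first.
  by case: eqP => [->|].
have Phi0 : forall z, (0 <= @Phi R d T r n A z)%E.
  by move=> z; rewrite /Phi lee_fin; have /andP[] := A01 (r z.1)
    (emp_cdf r (mk z.1 z.2) (r z.1)) z.1 (empirical R (mk z.1 z.2)).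
have main : forall B, measurable B ->
    P (X ord0 @^-1` B `&` [set w | C ord0 w]) = (\int[pbar]_(x in B) gfun P X r A x)%E.
  move=> B mB; rewrite hC; last first.
    apply: sub_gen_smallest; exists ord0 => //; exists B => //; by rewrite setTI.
  transitivity (\int[P]_(w in X ord0 @^-1` B) @Phi R d T r n A (Z X w))%E.
    by apply: eq_integral => w _; rewrite hZ.
  rewrite (key iid (Phi_meas mr mA) Phi0 mB).
  apply: eq_integral => x _; rewrite /gfun; apply: eq_integral => w _.
  exact: hPhi.
have hT := main setT measurableT; rewrite preimage_setT setTI in hT.
split; first by rewrite -hT.
by move=> B mB; rewrite main // hT.
Qed.
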